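(* Assume $\Sigma_n$ and $V_n$ are invertible and $\mathcal{D}_n^{\Sigma} := \|\Sigma_n^{-1/2}\widehat{\Sigma}_n\Sigma_n^{-1/2} - I_d\|_{\mathrm{op}} < 1$. Then \[ \max_{1\le j\le d}\left|\frac{\widehat{\beta}_j - \beta_j - n^{-1}\sum_{i=1}^n \psi_{ij}}{\sqrt{(\Sigma_n^{-1}V_n\Sigma_n^{-1})_{jj}}}\right| \le \kappa(\Sigma_n^{-1/2}V_n^{1/2})\frac{\mathcal{D}_n^{\Sigma}}{1 - \mathcal{D}_n^{\Sigma}}\Big\|\frac{1}{n}\sum_{i=1}^n \psi_i\Big\|_{\Sigma_n V^{-1}_n\Sigma_n}, \] where $\psi_i := \Sigma_n^{-1}X_i(Y_i-X_i^\top\beta)$ and $\psi_{ij}$ is its $j$-th coordinate.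
   Context: Let $(X_1,Y_1),\dots,(X_n,Y_n)$ be random elements of $\mathbb{R}^d\times\mathbb{R}$ (not necessarily independent or identically distributed) with finite second moments. Define $\Sigma_n := n^{-1}\sum_{i=1}^n\mathbb{E}[X_iX_i^\top]$, $\Gamma_n := n^{-1}\sum_{i=1}^n\mathbb{E}[X_iY_i]$, $\beta := \Sigma_n^{-1}\Gamma_n$, $\widehat{\Sigma}_n := n^{-1}\sum_{i=1}^n X_iX_i^\top$, $\widehat{\Gamma}_n := n^{-1}\sum_{i=1}^n X_iY_i$, $\widehat\beta := \widehat{\Sigma}_n^{-1}\widehat{\Gamma}_n$, and $V_n := \mathrm{Var}\big(n^{-1}\sum_{i=1}^n X_i(Y_i - X_i^\top\beta)\big)$. For positive definite $A$, $\|x\|_A := \sqrt{x^\top A x}$; $\kappa(A) := \|A^{-1}\|_{\mathrm{op}}\|A\|_{\mathrm{op}}$. *)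

(* Defs.v *)
From HB Require Import structures.
From mathcomp Require Import all_boot all_order all_algebra.
From mathcomp Require Import all_classical all_reals all_analysis.
Set Implicit Arguments. Unset Strict Implicit. Unset Printing Implicit Defensive.
Import Order.TTheory GRing.Theory Num.Theory.
Local Open Scope ring_scope.

Section Defs.
Variable R : realType.

Definition vnorm (k : nat) (x : 'cV[R]_k) : R := Num.sqrt (\sum_i x i 0 ^+ 2).

Definition opnorm (m k : nat) (A : 'M[R]_(m, k)) : R :=
  sup [set vnorm (A *m x) | x in [set x : 'cV[R]_k | vnorm x = 1]].

Definition kappa (k : nat) (A : 'M[R]_k) : R := opnorm (invmx A) * opnorm A.

Definition psdmx (k : nat) (B : 'M[R]_k) : Prop :=
  B^T = B /\ forall x : 'cV[R]_k, 0 <= (x^T *m B *m x) 0 0.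

(* the (unique) symmetric PSD square root A^{1/2}; 0 if none exists *)
Definition sqrtmx (k : nat) (A : 'M[R]_k) : 'M[R]_k :=
  match pselect (exists B, psdmx B /\ B *m B = A) with
  | left h => projT1 (cid h)
  | right _ => 0
  end.

Definition wnorm (k : nat) (A : 'M[R]_k) (x : 'cV[R]_k) : R :=
  Num.sqrt ((x^T *m A *m x) 0 0).

Context {dsp : measure_display} {T : measurableType dsp} (P : probability T R).

Definition Ex (f : T -> R) : R := fine ('E_P[f])%E.

Variables (n d : nat) (X : 'I_n -> T -> 'cV[R]_d) (Y : 'I_n -> T -> R).

Definition Sigma_n : 'M[R]_d :=
  \matrix_(k, l) ((n%:R)^-1 * \sum_i Ex (fun w => X i w k 0 * X i w l 0)).
Definition Gamma_n : 'cV[R]_d :=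
  \col_k ((n%:R)^-1 * \sum_i Ex (fun w => X i w k 0 * Y i w)).
Definition beta_n : 'cV[R]_d := invmx Sigma_n *m Gamma_n.

Definition Sigma_hat (w : T) : 'M[R]_d :=
  (n%:R)^-1 *: \sum_i (X i w *m (X i w)^T).
Definition Gamma_hat (w : T) : 'cV[R]_d :=
  (n%:R)^-1 *: \sum_i (Y i w *: X i w).
Definition beta_hat (w : T) : 'cV[R]_d := invmx (Sigma_hat w) *m Gamma_hat w.

Definition Zvec (w : T) : 'cV[R]_d :=
  (n%:R)^-1 *: \sum_i ((Y i w - ((X i w)^T *m beta_n) 0 0) *: X i w).
Definition V_n : 'M[R]_d :=
  \matrix_(k, l) fine (covariance P (fun w => Zvec w k 0) (fun w => Zvec w l 0)).

Definition psi (i : 'I_n) (w : T) : 'cV[R]_d :=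
  invmx Sigma_n *m ((Y i w - ((X i w)^T *m beta_n) 0 0) *: X i w).
Definition psi_bar (w : T) : 'cV[R]_d := (n%:R)^-1 *: \sum_i psi i w.

Definition DSigma (w : T) : R :=
  opnorm (invmx (sqrtmx Sigma_n) *m Sigma_hat w *m invmx (sqrtmx Sigma_n) - 1%:M).

End Defs.

(* Main.v *)
Require Import Defs.
From HB Require Import structures.
From mathcomp Require Import all_boot all_order all_algebra.
From mathcomp Require Import all_classical all_reals all_analysis.
From mathcomp Require ring lra complex.
Import Order.TTheory GRing.Theory Num.Theory.
Local Open Scope ring_scope.

Module H.
Import numFieldNormedType.Exports.
Import ring lra complex.
Set Implicit Arguments. Unset Strict Implicit.
Lemma horner_mx_tr (R : comNzRingType) n (A : 'M[R]_n.+1) p :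
  (horner_mx A p)^T = horner_mx A^T p.
Proof.
elim/poly_ind: p => [|p c IH]; first by rewrite !rmorph0 trmx0.
rewrite !rmorphD !rmorphM /= !horner_mx_X !horner_mx_C -!mulmxE raddfD /= trmx_mul IH.
by rewrite tr_scalar_mx (comm_mx_horner _ (comm_mx_refl _)).
Qed.

Lemma sqnorm_ge0 (R : realDomainType) n (y : 'cV[R]_n) : 0 <= (y^T *m y) 0 0.
Proof.
rewrite mxE; apply: sumr_ge0 => k _; rewrite mxE -expr2; exact: sqr_ge0.
Qed.

Lemma nonunit_ker (F : fieldType) n (A : 'M[F]_n) :
  A \notin unitmx -> exists2 x : 'cV_n, x != 0 & A *m x = 0.
Proof.
move=> nA.
have hK : kermx A^T != 0.
  apply/eqP => K0.
  have := mxrank_ker A^T; rewrite K0 mxrank0 mxrank_tr => /esym /eqP.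
  rewrite subn_eq0 => hr.
  move: nA; rewrite -row_free_unit /row_free.
  by rewrite eqn_leq rank_leq_row hr.
have [i hi] : exists i, row i (kermx A^T) != 0.
  apply/existsP; move: hK; apply: contraR; rewrite negb_exists => /forallP h.
  apply/eqP/row_matrixP => i; rewrite row0; exact/eqP/negPn/h.
exists (row i (kermx A^T))^T.
  by move: hi; apply: contra => /eqP h; rewrite -(trmxK (row _ _)) h trmx0.
by apply/trmx_inj; rewrite trmx_mul trmxK trmx0 -row_mul mulmx_ker row0.
Qed.

Lemma interp (F : fieldType) (s : seq F) (g : F -> F) :
  exists q : {poly F}, forall x, x \in s -> q.[x] = g x.
Proof.
elim: s => [|a s [q hq]]; first by exists 0.
have [ias|nas] := boolP (a \in s).
  by exists q => x; rewrite inE => /orP[/eqP->|]; [exact: hq|exact: hq].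
pose Pi := \prod_(b <- s) ('X - b%:P).
have Pa : Pi.[a] != 0 by rewrite -/(root Pi a) root_prod_XsubC.
exists (q + ((g a - q.[a]) / Pi.[a]) *: Pi) => x; rewrite inE hornerD hornerZ.
case/orP => [/eqP->|xs].
  by rewrite divfK // addrC subrK.
have /rootP -> : root Pi x by rewrite root_prod_XsubC.
by rewrite mulr0 addr0 hq.
Qed.

Section Sqrt.
Variable R : realType.
Local Notation toC := (real_complex R).

Lemma Vc_herm n (V : 'M[R]_n) : V^T = V -> map_mx toC V \is hermsymmx.
Proof.
move=> VT; apply: realsym_hermsym.
  rewrite qualifE /=.
  by rewrite expr0 scale1r map_mx_id // map_trmx VT.
by apply/mxOverP => i j; rewrite mxE; apply/complex_realP; eexists.
Qed.

Lemma conj_mulmx n (P X Y : 'M[R[i]]_n) : P \in unitmx ->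
  (invmx P *m X *m P) *m (invmx P *m Y *m P) = invmx P *m (X *m Y) *m P.
Proof.
move=> Pu; rewrite !mulmxA; congr (_ *m _); congr (_ *m _).
by rewrite mulmxK.
Qed.

Lemma psd_sqrt_ex n (V : 'M[R]_n.+1) : V^T = V ->
  (forall x : 'cV_n.+1, 0 <= (x^T *m V *m x) 0 0) ->
  exists W, psdmx W /\ W *m W = V.
Proof.
move=> VT Vpsd.
pose Vc := map_mx toC V.
have Vh := @Vc_herm _ V VT.
pose P := spectralmx Vc; pose lam := spectral_diag Vc.
have hV : Vc = invmx P *m diag_mx lam *m P.
  exact/orthomx_spectralP/hermitian_normalmx.
have Pu : P \in unitmx := spectral_unit Vc.
have lreal := hermitian_spectral_diag_real Vh.
pose mu i : R := complex.Re (lam 0 i).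
have lamE i : lam 0 i = toC (mu i).
  by rewrite /mu RRe_real //; exact: (mxOverP lreal).
have mu_ge0 i : 0 <= mu i.
  have : (V - (mu i)%:M) \notin unitmx.
    rewrite -(map_unitmx toC) map_mxB map_scalar_mx /= -/Vc -lamE unitmxE unitfE negbK.
    have -> : Vc - (lam 0 i)%:M = invmx P *m (diag_mx lam - (lam 0 i)%:M) *m P.
      by rewrite mulmxBr mulmxBl -hV mul_mx_scalar -scalemxAl mulVmx // scalemx1.
    rewrite !det_mulmx -diag_const_mx -linearB /= det_diag (bigD1 i) //= !mxE subrr.
    by rewrite mul0r mulr0 mul0r.
  case/nonunit_ker => x x0 hx.
  have Vx : V *m x = mu i *: x.
    by move/eqP: hx; rewrite mulmxBl subr_eq0 mul_scalar_mx => /eqP.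
  have := Vpsd x; rewrite -mulmxA Vx -scalemxAr mxE.
  have xpos : 0 < (x^T *m x) 0 0.
    rewrite lt0r sqnorm_ge0 andbT; apply: contra x0; rewrite mxE => /eqP h0.
    have h k : x^T 0 k * x k 0 = 0.
      by apply: (psumr_eq0P _ h0) => // k' _; rewrite mxE -expr2 sqr_ge0.
    apply/eqP/colP => k; rewrite mxE.
    by have := h k; rewrite mxE -expr2 => /eqP; rewrite sqrf_eq0 => /eqP.
  by rewrite pmulr_lge0.
have [r hr] := @interp _ [seq mu i | i <- enum 'I_n.+1] (fun t => Num.sqrt (Num.sqrt t)).
have hr' i : r.[mu i] = Num.sqrt (Num.sqrt (mu i)).
  by apply: hr; apply: map_f; rewrite mem_enum.
pose Rm := horner_mx V r.
have RmT : Rm^T = Rm by rewrite /Rm horner_mx_tr VT.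
exists (Rm *m Rm); split.
  split; first by rewrite trmx_mul RmT.
  move=> x; have -> : x^T *m (Rm *m Rm) *m x = (Rm *m x)^T *m (Rm *m x).
    by rewrite trmx_mul RmT !mulmxA.
  exact: sqnorm_ge0.
apply: (@map_mx_inj _ _ toC); rewrite !map_mxM /Rm map_horner_mx -/Vc hV.
rewrite horner_mx_uconjC; last exact: Pu.
rewrite horner_mx_diag !(@conj_mulmx _ P _ _ Pu) !mulmx_diag.
congr (_ *m diag_mx _ *m _); apply/rowP => j; rewrite !mxE lamE horner_map hr'.
rewrite -!rmorphM; congr (toC _).
by rewrite -!expr2 sqr_sqrtr ?sqrtr_ge0 // sqr_sqrtr.
Qed.
End Sqrt.

Section Norms.
Variable R : realType.
Implicit Types (k : nat).

Definition dot k (u v : 'cV[R]_k) : R := (u^T *m v) 0 0.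

Lemma dotE k (u v : 'cV[R]_k) : dot u v = \sum_i u i 0 * v i 0.
Proof. by rewrite /dot mxE; apply: eq_bigr => i _; rewrite mxE. Qed.

Lemma dotC k (u v : 'cV[R]_k) : dot u v = dot v u.
Proof. by rewrite !dotE; apply: eq_bigr => i _; rewrite mulrC. Qed.

Lemma dot_mul k l (u : 'cV[R]_k) (A : 'M[R]_(k, l)) v :
  dot u (A *m v) = dot (A^T *m u) v.
Proof. by rewrite /dot trmx_mul trmxK mulmxA. Qed.

Lemma dotDl k (u v w : 'cV[R]_k) : dot (u + v) w = dot u w + dot v w.
Proof. by rewrite !dotE -big_split; apply: eq_bigr => i _; rewrite mxE mulrDl. Qed.

Lemma dotZl k a (u w : 'cV[R]_k) : dot (a *: u) w = a * dot u w.
Proof. by rewrite !dotE mulr_sumr; apply: eq_bigr => i _; rewrite mxE mulrA. Qed.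

Lemma dotNl k (u w : 'cV[R]_k) : dot (- u) w = - dot u w.
Proof. by rewrite -scaleN1r dotZl mulN1r. Qed.

Lemma dotDr k (u v w : 'cV[R]_k) : dot w (u + v) = dot w u + dot w v.
Proof. by rewrite !(dotC w) dotDl. Qed.

Lemma dotZr k a (u w : 'cV[R]_k) : dot w (a *: u) = a * dot w u.
Proof. by rewrite !(dotC w) dotZl. Qed.

Lemma dotNr k (u w : 'cV[R]_k) : dot w (- u) = - dot w u.
Proof. by rewrite !(dotC w) dotNl. Qed.

Lemma dot_ge0 k (u : 'cV[R]_k) : 0 <= dot u u.
Proof. by rewrite dotE; apply: sumr_ge0 => i _; rewrite -expr2 sqr_ge0. Qed.

Lemma dot_eq0 k (u : 'cV[R]_k) : dot u u = 0 -> u = 0.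
Proof.
rewrite dotE => h0; apply/colP => i; rewrite mxE.
have h j : u j 0 * u j 0 = 0.
  by apply: (psumr_eq0P _ h0) => // j' _; rewrite -expr2 sqr_ge0.
by have := h i; rewrite -expr2 => /eqP; rewrite sqrf_eq0 => /eqP.
Qed.

Lemma vnormE k (x : 'cV[R]_k) : vnorm x = Num.sqrt (dot x x).
Proof. by rewrite /vnorm dotE; congr Num.sqrt; apply: eq_bigr => i _; rewrite expr2. Qed.

Lemma vnorm_ge0 k (x : 'cV[R]_k) : 0 <= vnorm x.
Proof. by rewrite vnormE sqrtr_ge0. Qed.

Lemma vnorm_sq k (x : 'cV[R]_k) : vnorm x ^+ 2 = dot x x.
Proof. by rewrite vnormE sqr_sqrtr // dot_ge0. Qed.

Lemma vnorm_eq0 k (x : 'cV[R]_k) : vnorm x = 0 -> x = 0.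
Proof. by move=> h; apply: dot_eq0; rewrite -vnorm_sq h expr0n. Qed.

Lemma vnorm0 k : vnorm (0 : 'cV[R]_k) = 0.
Proof. by rewrite vnormE dotE big1 ?sqrtr0 // => i _; rewrite mxE mul0r. Qed.

Lemma vnormZ k a (x : 'cV[R]_k) : vnorm (a *: x) = `|a| * vnorm x.
Proof.
by rewrite !vnormE dotZl dotZr mulrA -expr2 sqrtrM ?sqr_ge0 // sqrtr_sqr.
Qed.

Lemma vnormN k (x : 'cV[R]_k) : vnorm (- x) = vnorm x.
Proof. by rewrite -scaleN1r vnormZ normrN1 mul1r. Qed.

Lemma CS2 k (u v : 'cV[R]_k) : dot u v ^+ 2 <= dot u u * dot v v.
Proof.
  have [v0|vn0] := eqVneq (dot v v) 0.
    by rewrite v0 mulr0 (dot_eq0 v0) dotC /dot trmx0 mul0mx mxE expr0n.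
  have c0 : 0 < dot v v by rewrite lt0r vn0 dot_ge0.
  pose t := dot u v / dot v v.
  have := dot_ge0 (u - t *: v).
  have -> : dot (u - t *: v) (u - t *: v) = dot u u - dot u v ^+ 2 / dot v v.
    rewrite dotDl !dotDr !dotNl !dotNr !dotZl !dotZr (dotC v u) /t.
    by field; exact: vn0.
  by rewrite subr_ge0 ler_pdivrMr.
Qed.

Lemma CS k (u v : 'cV[R]_k) : `|dot u v| <= vnorm u * vnorm v.
Proof.
have key := CS2 u v.
rewrite !vnormE -sqrtrM ?dot_ge0 // -sqrtr_sqr ler_sqrt //.
by rewrite mulr_ge0 ?dot_ge0.
Qed.

Lemma vnormD k (u v : 'cV[R]_k) : vnorm (u + v) <= vnorm u + vnorm v.
Proof.
rewrite -(ger0_norm (vnorm_ge0 (u + v))) -(ger0_norm (addr_ge0 (vnorm_ge0 u) (vnorm_ge0 v))).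
rewrite -ler_sqr ?nnegrE ?normr_ge0 // !real_normK ?num_real // vnorm_sq sqrrD !vnorm_sq.
rewrite dotDl !dotDr (dotC v u) mulr2n.
have := CS u v; have := ler_norm (dot u v); lra.
Qed.

Lemma opnorm_bound m k (A : 'M[R]_(m, k)) :
  exists K, forall x, vnorm (A *m x) <= K * vnorm x.
Proof.
exists (Num.sqrt (\sum_i dot (row i A)^T (row i A)^T)).
move=> x; rewrite !vnormE -sqrtrM; last by apply: sumr_ge0 => i _; exact: dot_ge0.
rewrite ler_sqrt; last by rewrite mulr_ge0 ?dot_ge0 // sumr_ge0 // => i _; exact: dot_ge0.
rewrite dotE mulr_suml; apply: ler_sum => i _.
have -> : (A *m x) i 0 = dot (row i A)^T x.
  by rewrite dotE mxE; apply: eq_bigr => j _; rewrite !mxE.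
by rewrite -expr2 CS2.
Qed.


Lemma opnorm_ub m k (A : 'M[R]_(m, k)) x : vnorm (A *m x) <= opnorm A * vnorm x.
Proof.
have [K hK] := opnorm_bound A.
have ub : has_ubound [set vnorm (A *m x) | x in [set x : 'cV[R]_k | vnorm x = 1]].
  by exists K => _ [y hy <-]; rewrite (le_trans (hK y)) // hy mulr1.
have [->|x0] := eqVneq x 0; first by rewrite mulmx0 !vnorm0 mulr0.
have nx : 0 < vnorm x.
  rewrite lt0r vnorm_ge0 andbT; apply: contra x0 => /eqP h; exact/eqP/vnorm_eq0.
pose y := (vnorm x)^-1 *: x.
have y1 : vnorm y = 1 by rewrite vnormZ ger0_norm ?invr_ge0 ?vnorm_ge0 // mulVf // gt_eqF.
have := ub_le_sup ub (ex_intro2 _ _ y y1 erefl).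
rewrite -scalemxAr vnormZ ger0_norm ?invr_ge0 ?vnorm_ge0 // mulrC.
by rewrite -/(_ / _) ler_pdivrMr.
Qed.

Lemma dot_delta k (j : 'I_k) (v : 'cV[R]_k) : dot (delta_mx j 0) v = v j 0.
Proof.
rewrite dotE (bigD1 j) //= big1 ?addr0; first by rewrite mxE !eqxx mul1r.
by move=> i /negPf hi; rewrite mxE hi mul0r.
Qed.

Lemma vnorm_delta k (j : 'I_k) : vnorm (delta_mx j 0 : 'cV[R]_k) = 1.
Proof. by rewrite vnormE dot_delta mxE !eqxx sqrtr1. Qed.

Lemma opnorm_ge0 m k (A : 'M[R]_(m, k.+1)) : 0 <= opnorm A.
Proof.
have := opnorm_ub A (delta_mx 0 0); rewrite vnorm_delta mulr1.
exact/le_trans/vnorm_ge0.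
Qed.

Lemma entry_dot k (X : 'M[R]_k) j : X j j = dot (delta_mx j 0) (X *m delta_mx j 0).
Proof. by rewrite dot_delta -colE mxE. Qed.

Lemma invmxM k (A B : 'M[R]_k) : A \in unitmx -> B \in unitmx ->
  invmx (A *m B) = invmx B *m invmx A.
Proof.
move=> Au Bu; have h : (A *m B) *m (invmx B *m invmx A) = 1%:M.
  by rewrite mulmxA mulmxK // mulmxV.
by rewrite -[LHS]mulmx1 -h mulKmx // unitmx_mul Au Bu.
Qed.

Lemma main_alg n (S Sh V B C : 'M[R]_n.+1) (Gh Z beta psi : 'cV[R]_n.+1)
    (j : 'I_n.+1) :
  B^T = B -> C^T = C -> B *m B = S -> C *m C = V ->
  S \in unitmx -> V \in unitmx ->
  opnorm (invmx B *m Sh *m invmx B - 1%:M) < 1 ->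
  Z = Gh - Sh *m beta -> psi = invmx S *m Z ->
  `| (invmx Sh *m Gh - beta - psi) j 0 / Num.sqrt ((invmx S *m V *m invmx S) j j) |
   <= kappa (invmx B *m C) *
      (opnorm (invmx B *m Sh *m invmx B - 1%:M) /
        (1 - opnorm (invmx B *m Sh *m invmx B - 1%:M)))
      * wnorm (S *m invmx V *m S) psi.
Proof.
move=> BT CT BS CV Su Vu hD hZ hpsi.
have Bu : B \in unitmx by move: Su; rewrite -BS unitmx_mul => /andP[].
have Cu : C \in unitmx by move: Vu; rewrite -CV unitmx_mul => /andP[].
set Bi := invmx B; set Ci := invmx C.
have Biu : Bi \in unitmx by rewrite unitmx_inv.
have Ciu : Ci \in unitmx by rewrite unitmx_inv.
have BiT : Bi^T = Bi by rewrite /Bi trmx_inv BT.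
have CiT : Ci^T = Ci by rewrite /Ci trmx_inv CT.
set A := Bi *m Sh *m Bi.
set D := opnorm (A - 1%:M).
have D0 : 0 <= D := opnorm_ge0 _.
have D1 : 0 < 1 - D by rewrite subr_gt0.
have Au : A \in unitmx.
  apply/negPn/negP => /nonunit_ker [x x0 hx].
  have ex : x = - ((A - 1%:M) *m x) by rewrite mulmxBl hx mul1mx sub0r opprK.
  have h1 : vnorm x <= D * vnorm x by rewrite {1}ex vnormN opnorm_ub.
  have h2 : (1 - D) * vnorm x <= 0 by rewrite mulrBl mul1r subr_le0.
  move: h2; rewrite pmulr_rle0 // => h3.
  have : vnorm x = 0 by apply/eqP; rewrite eq_le h3 vnorm_ge0.
  by move/vnorm_eq0/eqP; rewrite (negPf x0).
have ShE : Sh = B *m A *m B by rewrite /A /Bi !mulmxA mulmxKV // mulmxV // mul1mx.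
have Shu : Sh \in unitmx by move: Au; rewrite !unitmx_mul => /andP[/andP[_ ->]].
have SiE : invmx S = Bi *m Bi by rewrite -BS invmxM.
have ViE : invmx V = Ci *m Ci by rewrite -CV invmxM.
set e := invmx Sh *m Gh - beta - psi.
set g := B *m psi.
set y := B *m e.
have hyg : y + g = B *m (invmx Sh *m Z).
  rewrite /y /g -mulmxDr /e subrK hZ; congr (B *m _); by rewrite mulmxBr mulKmx.
have hAy : A *m (y + g) = g.
  by rewrite hyg /A /g hpsi SiE /Bi !mulmxA mulmxKV // mulmxK // mulmxV // mul1mx.
have hy : y = - ((A - 1%:M) *m (y + g)).
  by rewrite mulmxBl hAy mul1mx opprB addrK.
have hvy : vnorm y <= D / (1 - D) * vnorm g.
  have h1 : vnorm y <= D * (vnorm y + vnorm g).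
    rewrite {1}hy vnormN (le_trans (opnorm_ub _ _)) //.
    by rewrite ler_wpM2l // vnormD.
  rewrite mulrAC ler_pdivlMr //; nra.
have eE : e = Bi *m y by rewrite /y mulKmx.
set M := Bi *m C.
have Mu : M \in unitmx by rewrite unitmx_mul Biu Cu.
set Mi := invmx M.
have MiE : Mi = Ci *m B by rewrite /Mi /M invmxM // invmxK.
pose u : 'cV[R]_n.+1 := Bi *m delta_mx j 0.
pose den := vnorm (M^T *m u).
have hX : invmx S *m V *m invmx S = Bi^T *m M *m M^T *m Bi.
  by rewrite SiE -CV /M trmx_mul BiT CT !mulmxA.
have hden : Num.sqrt ((invmx S *m V *m invmx S) j j) = den.
  rewrite /den vnormE entry_dot hX; congr Num.sqrt.
  by rewrite -!mulmxA dot_mul trmxK -/u mulmxA -/M dot_mul.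
have hwn : wnorm (S *m invmx V *m S) psi = vnorm (Mi *m g).
  have hY : S *m invmx V *m S = (Mi *m B)^T *m (Mi *m B).
    by rewrite MiE !trmx_mul BT CiT -BS ViE !mulmxA.
  rewrite /wnorm vnormE hY; congr Num.sqrt.
  rewrite -mulmxA -/(dot psi _) -mulmxA dot_mul trmxK /g.
  by rewrite !mulmxA.
have hej : e j 0 = dot u y.
  by rewrite -dot_delta eE dot_mul /u BiT.
have h_ej : `|e j 0| <= vnorm u * vnorm y by rewrite hej CS.
have hu : vnorm u <= opnorm Mi * den.
  have hMiMT : Mi^T *m M^T = 1%:M by rewrite -trmx_mul mulmxV // trmx1.
  have h1 : vnorm u ^+ 2 <= opnorm Mi * vnorm u * den.
    rewrite vnorm_sq -{2}[u]mul1mx -hMiMT -mulmxA dot_mul trmxK.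
    rewrite (le_trans (ler_norm _)) // (le_trans (CS _ _)) //.
    by rewrite ler_wpM2r ?vnorm_ge0 // opnorm_ub.
  have [u0|un0] := eqVneq (vnorm u) 0.
    by rewrite u0 mulr_ge0 ?opnorm_ge0 ?vnorm_ge0.
  have upos : 0 < vnorm u by rewrite lt0r un0 vnorm_ge0.
  by move: h1; rewrite expr2 -mulrA [_ * den]mulrC mulrA ler_pM2r.
have hg : vnorm g <= opnorm M * vnorm (Mi *m g).
  by rewrite -{1}[g]mul1mx -(mulmxV Mu) -mulmxA opnorm_ub.
rewrite -/e hden hwn /kappa -/M -/Mi.
have [d0|dn0] := eqVneq den 0.
  rewrite d0 invr0 mulr0 normr0 !mulr_ge0 ?opnorm_ge0 ?vnorm_ge0 //.
  by rewrite invr_ge0 ltW.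
have dpos : 0 < den by rewrite lt0r dn0 vnorm_ge0.
rewrite normrM normfV (ger0_norm (ltW dpos)) ler_pdivrMr //.
apply: (le_trans h_ej).
have hq : 0 <= D / (1 - D) by rewrite divr_ge0 // ltW.
apply: (le_trans (ler_pM (vnorm_ge0 _) (vnorm_ge0 _) hu hvy)).
have h := ler_wpM2l (mulr_ge0 (opnorm_ge0 Mi) (ltW dpos)) (ler_wpM2l hq hg).
rewrite [X in _ <= X](_ : _ = opnorm Mi * den * (D / (1 - D) * (opnorm M * vnorm (Mi *m g)))).
  exact: h.
by rewrite /D; ring.
Qed.
End Norms.

Section Prob.
Context (R : realType) (dsp : measure_display) (T : measurableType dsp)
  (P : probability T R).

Lemma L2_of (f : T -> R) : measurable_fun setT f ->
  P.-integrable setT (fun w => ((f w) ^+ 2)%:E) -> f \in Lfun P 2%:E.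
Proof.
move=> mf /integrableP [_ fi].
rewrite inE; apply/andP; split; first by rewrite inE /=.
rewrite inE /= /finite_norm unlock /Lnorm poweR_lty //.
apply: le_lt_trans fi; rewrite le_eqVlt; apply/orP; left; apply/eqP.
apply: eq_integral => w _ /=.
by rewrite powR_mulrn ?normr_ge0 // normrX.
Qed.

Lemma cov_sum (I : Type) (s : seq I) (c : I -> R) (F : I -> T -> R) (G : T -> R) :
  (forall i, F i \in Lfun P 2%:E) -> G \in Lfun P 2%:E ->
  (fun w => \sum_(i <- s) F i w * c i) \in Lfun P 2%:E /\
  covariance P (fun w => \sum_(i <- s) F i w * c i) G
    = (\sum_(i <- s) c i * fine (covariance P (F i) G))%:E.
Proof.
move=> hF hG.
have Pfin : P setT \is a fin_num := fin_num_measure P _ measurableT.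
elim: s => [|a s [IH1 IH2]].
  have -> : (fun w => \sum_(i <- [::]) F i w * c i) = cst 0.
    by apply/funext => w; rewrite big_nil.
  by rewrite big_nil covariance_cst_l; split => //; exact: Lfun_cst.
have -> : (fun w => \sum_(i <- a :: s) F i w * c i) =
    ((c a \o* F a) \+ (fun w => \sum_(i <- s) F i w * c i))%R.
  by apply/funext => w; rewrite big_cons.
have Fa2 : (c a \o* F a)%R \in Lfun P 2%:E by apply: (@Lfun_scale _ _ _ _ _ _ 2); [lra | exact: hF].
split; first by rewrite rpredD ?lee1n // => _.
rewrite covarianceDl // IH2 covarianceZl; last 3 first.
- exact: Lfun_subset12.
- exact: Lfun_subset12.
- exact: Lfun2_mul_Lfun1.
rewrite -(@fineK _ (covariance P (F a) G)); last first.
  by apply: covariance_fin_num; [exact: Lfun_subset12|exact: Lfun_subset12|exact: Lfun2_mul_Lfun1].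
by rewrite big_cons -EFinM -EFinD.
Qed.


Variables (n d : nat) (X : 'I_n -> T -> 'cV[R]_d) (Y : 'I_n -> T -> R).

Lemma Zentry w k : Zvec P X Y w k 0 =
  n%:R^-1 * \sum_i ((Y i w - \sum_l X i w l 0 * beta_n P X Y l 0) * X i w k 0).
Proof.
rewrite /Zvec mxE summxE; congr (_ * _); apply: eq_bigr => i _; rewrite mxE.
congr (_ * _); congr (_ - _); rewrite mxE; apply: eq_bigr => l _; rewrite mxE.
by [].
Qed.

Lemma Zmeas (mX : forall i k, measurable_fun setT (fun w => X i w k 0))
  (mY : forall i, measurable_fun setT (Y i)) k :
  measurable_fun setT (fun w => Zvec P X Y w k 0).
Proof.
have -> : (fun w => Zvec P X Y w k 0) = (fun w =>
  n%:R^-1 * \sum_i ((Y i w - \sum_l X i w l 0 * beta_n P X Y l 0) * X i w k 0)).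
  by apply/funext => w; exact: Zentry.
apply: measurable_realfun.measurable_funM; first exact: measurable_cst.
apply: measurable_sum => i; apply: measurable_realfun.measurable_funM => //.
apply: measurable_realfun.measurable_funB => //; apply: measurable_sum => l.
by apply: measurable_realfun.measurable_funM => //; exact: measurable_cst.
Qed.

Lemma V_psd (hZ : forall k, (fun w => Zvec P X Y w k 0) \in Lfun P 2%:E) :
  psdmx (V_n P X Y).
Proof.
split.
  by apply/matrixP => k l; rewrite !mxE covarianceC.
move=> x.
pose Zf k := fun w => Zvec P X Y w k 0.
pose W := fun w => \sum_(k <- index_enum 'I_d) Zf k w * x k 0.
have hW G := @cov_sum _ (index_enum 'I_d) (fun k => x k 0) Zf G hZ.
have W2 : W \in Lfun P 2%:E.
  by have [] := hW (cst 0) (Lfun_cst _ _ _).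
have hk k : fine (covariance P (Zf k) W) =
    \sum_(l <- index_enum 'I_d) x l 0 * fine (covariance P (Zf l) (Zf k)).
  by rewrite covarianceC (hW (Zf k) (hZ k)).2.
have := variance_ge0 P W; rewrite /variance (hW W W2).2 lee_fin.
under eq_bigr do rewrite hk.
move=> h; apply: (le_trans h); rewrite le_eqVlt; apply/orP; left; apply/eqP.
rewrite mxE; under [RHS]eq_bigr do rewrite mxE mulr_suml.
rewrite exchange_big /=; apply: eq_bigr => k _; rewrite mulr_sumr.
apply: eq_bigr => l _; rewrite !mxE covarianceC; ring.
Qed.


Lemma Z_eq w : Zvec P X Y w = Gamma_hat X Y w - Sigma_hat X w *m beta_n P X Y.
Proof.
rewrite /Zvec /Gamma_hat /Sigma_hat -scalemxAl -scalerBr; congr (_ *: _).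
rewrite mulmx_suml -sumrB; apply: eq_bigr => i _.
rewrite scalerBl; congr (_ - _).
by rewrite -mul_mx_scalar -mx11_scalar mulmxA.
Qed.

Lemma psi_eq w : psi_bar P X Y w = invmx (Sigma_n P X) *m Zvec P X Y w.
Proof. by rewrite /psi_bar /psi /Zvec -scalemxAr mulmx_sumr. Qed.

End Prob.


Section Extra.
Variable R : realType.

Lemma sqrtmx_ok k (A : 'M[R]_k) : (exists B, psdmx B /\ B *m B = A) ->
  psdmx (sqrtmx A) /\ sqrtmx A *m sqrtmx A = A.
Proof. by move=> h; rewrite /sqrtmx; case: pselect => [h'|//]; exact: projT2 (cid h'). Qed.

Lemma sqrtmx_none k (A : 'M[R]_k) : ~ (exists B, psdmx B /\ B *m B = A) ->
  sqrtmx A = 0.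
Proof. by move=> h; rewrite /sqrtmx; case: pselect. Qed.

Lemma entryB m k (A B : 'M[R]_(m, k)) i j : (A - B) i j = A i j - B i j.
Proof. by rewrite !mxE. Qed.
End Extra.
End H.
Import H.

Theorem mainTheorem2 (R : realType) (dsp : measure_display)
  (T : measurableType dsp) (P : probability T R) (n d : nat)
  (X : 'I_n -> T -> 'cV[R]_d) (Y : 'I_n -> T -> R)
  (mX : forall i k, measurable_fun setT (fun w => X i w k 0))
  (mY : forall i, measurable_fun setT (Y i))
  (X2 : forall i k, P.-integrable setT (fun w => ((X i w k 0) ^+ 2)%:E))
  (Y2 : forall i, P.-integrable setT (fun w => ((Y i w) ^+ 2)%:E))
  (Z2 : forall k, P.-integrable setT
          (fun w => ((Zvec P X Y w k 0) ^+ 2)%:E))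
  (hS : Sigma_n P X \in unitmx) (hV : V_n P X Y \in unitmx)
  (w : T) (hD : DSigma P X w < 1) :
  forall j : 'I_d,
    `| (beta_hat X Y w j 0 - beta_n P X Y j 0 - psi_bar P X Y w j 0)
        / Num.sqrt ((invmx (Sigma_n P X) *m V_n P X Y *m invmx (Sigma_n P X)) j j) |
    <= kappa (invmx (sqrtmx (Sigma_n P X)) *m sqrtmx (V_n P X Y))
       * (DSigma P X w / (1 - DSigma P X w))
       * wnorm (Sigma_n P X *m invmx (V_n P X Y) *m Sigma_n P X) (psi_bar P X Y w).

Proof.
move=> j; move: X mX X2 Z2 hS hV hD j.
case: d => [|d'] X mX X2 Z2 hS hV hD j; first by case: j.
have hZ k := L2_of (Zmeas P mX mY k) (Z2 k).
have Vpsd := V_psd hZ.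
have [C [Cpsd CC]] := psd_sqrt_ex Vpsd.1 Vpsd.2.
have [[CT _] CC'] := sqrtmx_ok (ex_intro _ C (conj Cpsd CC)).
case: (pselect (exists B, psdmx B /\ B *m B = Sigma_n P X)) => [hB|nB]; last first.
  exfalso; move: hD; rewrite /DSigma sqrtmx_none // invmx_out; last first.
    by rewrite inE unitmxE det0 unitr0.
  rewrite mul0mx mulmx0 sub0r => h1.
  have := opnorm_ub (- 1%:M : 'M[R]_d'.+1) (delta_mx 0 0).
  rewrite mulNmx mul1mx vnormN vnorm_delta mulr1 => h2.
  by have := lt_le_trans h1 h2; rewrite ltxx.
have [[BT _] BB] := sqrtmx_ok hB.
rewrite -!entryB.
exact: (main_alg j BT CT BB CC' hS hV hD (Z_eq P X Y w) (psi_eq P X Y w)).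
Qed.
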